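(* Let $X$ be a nonempty finite $T_0$-space and $I$ the identity matrix of order $|X|$. Then (1) $X$ is a totally ordered set if and only if $\det(X_M+I)=1$; and (2) $\det(X_M+I)=0$ if and only if $X$ is not a totally ordered set.
   Context: A finite $T_0$-space is identified with a finite poset via $x\le y$ iff $U_x\subseteq U_y$, where $U_x$ is the minimal open set containing $x$. For a labelling $X=\{x_1,\dots,x_n\}$, $X_M=(x_{i,j})$ is the $n\times n$ matrix with $x_{i,j}=0$ if $x_i\le x_j$ and $x_{i,j}=1$ otherwise. *)

(* Defs.v *)
From mathcomp Require Import all_boot all_order all_algebra.
Set Implicit Arguments. Unset Strict Implicit. Unset Printing Implicit Defensive.
Import GRing.Theory.

(* A topology on a finite type T, given by its family of open sets.
   Since T is finite, closure under binary unions/intersections suffices. *)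
Definition is_topology (T : finType) (opens : {set {set T}}) : Prop :=
  [/\ set0 \in opens, setT \in opens,
      (forall U V, U \in opens -> V \in opens -> U :|: V \in opens) &
      (forall U V, U \in opens -> V \in opens -> U :&: V \in opens)].

Definition is_T0 (T : finType) (opens : {set {set T}}) : Prop :=
  forall x y : T, x != y -> exists2 U, U \in opens & (x \in U) != (y \in U).

Definition minopen (T : finType) (opens : {set {set T}}) (x : T) : {set T} :=
  \bigcap_(U in opens | x \in U) U.

Definition top_le (T : finType) (opens : {set {set T}}) (x y : T) : bool :=
  minopen opens x \subset minopen opens y.

Definition top_total (T : finType) (opens : {set {set T}}) : Prop :=
  forall x y : T, top_le opens x y || top_le opens y x.

Definition XM (T : finType) (opens : {set {set T}}) (n : nat) (f : 'I_n -> T)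
  : 'M[int]_n :=
  \matrix_(i, j) ((if top_le opens (f i) (f j) then 0%R else 1%R) : int).

(* Main.v *)
Require Import Defs.
From mathcomp Require Import all_boot all_order all_algebra.
From mathcomp Require Import all_fingroup.
Local Open Scope ring_scope.
Set Implicit Arguments. Unset Strict Implicit.
Import GRing.Theory.

Lemma tle_refl (T : finType) (o : {set {set T}}) x : top_le o x x.
Proof. by rewrite /top_le subxx. Qed.

Lemma tle_trans (T : finType) (o : {set {set T}}) x y z :
  top_le o x y -> top_le o y z -> top_le o x z.
Proof. exact: subset_trans. Qed.

Lemma mem_minopen (T : finType) (o : {set {set T}}) x : x \in minopen o x.
Proof. by apply/bigcapP => U /andP[_]. Qed.

Lemma tle_anti (T : finType) (o : {set {set T}}) x y : is_T0 o ->
  top_le o x y -> top_le o y x -> x = y.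
Proof.
move=> T0 hxy hyx; case: (eqVneq x y) => // nxy.
case: (T0 x y nxy) => U HU.
case hx: (x \in U); case hy: (y \in U) => // _.
- have sub : minopen o x \subset U by apply: bigcap_inf; rewrite HU hx.
  by move: (subsetP sub y (subsetP hyx y (mem_minopen o y))); rewrite hy.
- have sub : minopen o y \subset U by apply: bigcap_inf; rewrite HU hy.
  by move: (subsetP sub x (subsetP hxy x (mem_minopen o x))); rewrite hx.
Qed.

Definition tlt (T : finType) (o : {set {set T}}) x y := (x != y) && top_le o x y.
Definition Up (T : finType) (o : {set {set T}}) x := [set y | tlt o x y].

Lemma key (T : finType) (o : {set {set T}}) a b w : is_T0 o ->
  ~~ top_le o a b -> ~~ top_le o b a -> tlt o a w -> ~~ tlt o b w ->
  (~~ top_le o w b && ~~ top_le o b w) /\ (#|Up o w| < #|Up o a|)%N.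
Proof.
move=> T0 nab nba /andP[naw law] nlt; split.
  apply/andP; split; apply/negP => h.
  - by move: nab; rewrite (tle_trans law h).
  - move: nlt; rewrite /tlt h andbT negbK => /eqP e; subst w.
    by move: nab; rewrite law.
apply: proper_card; apply/properP; split.
  apply/subsetP => v; rewrite !inE => /andP[nwv lwv].
  rewrite /tlt (tle_trans law lwv) andbT; apply/eqP => e; subst v.
  by move: naw; rewrite (tle_anti T0 law lwv) eqxx.
by exists w; rewrite !inE /tlt ?eqxx // naw law.
Qed.

Lemma twin (T : finType) (o : {set {set T}}) : is_T0 o -> ~ top_total o ->
  exists a b, [/\ a != b, ~~ top_le o a b, ~~ top_le o b a &
                 forall k, tlt o a k = tlt o b k].
Proof.
move=> T0 nt.
have [x [y Hxy]] : exists x y, ~~ (top_le o x y || top_le o y x).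
  case: (boolP [forall x, forall y, top_le o x y || top_le o y x]).
    by move=> /forallP H; exfalso; apply: nt => x y; exact: (forallP (H x) y).
  by move=> /forallPn [x /forallPn [y Hy]]; exists x, y.
pose P := fun p : T * T => ~~ top_le o p.1 p.2 && ~~ top_le o p.2 p.1.
have P0 : P (x, y) by rewrite /P /= -negb_or.
case: (arg_minnP (fun p => #|Up o p.1| + #|Up o p.2|)%N P0)
  => [[a b]] /= /andP[nab nba] Hmin.
exists a, b; split => //.
  by apply/eqP => e; subst b; rewrite tle_refl in nab.
move=> k; apply/idP/idP => h; apply/negPn/negP => h'.
- case: (key T0 nab nba h h') => Pk lt.
  have := Hmin (k, b) Pk; rewrite /= leq_add2r leqNgt.
  by rewrite lt.
- case: (key T0 nba nab h h') => Pk lt.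
  have Pk' : P (a, k) by rewrite /P /= andbC.
  have := Hmin (a, k) Pk'; rewrite /= leq_add2l leqNgt.
  by rewrite lt.
Qed.

Definition Mr (n : nat) (r : rel 'I_n) : 'M[int]_n :=
  \matrix_(i, j) ((if r i j then 0 else 1) + (i == j)%:R).

Lemma det_total n (r : rel 'I_n) :
  (forall i, r i i) -> (forall i j k, r i j -> r j k -> r i k) ->
  (forall i j, r i j -> r j i -> i = j) -> (forall i j, r i j || r j i) ->
  \det (Mr r) = 1.
Proof.
move=> rr rt ra rtot.
rewrite /determinant (bigD1 1%g) //= [X in _ + X]big1 ?addr0; last first.
move=> s hs.
case: (boolP [exists j, (s j != j) && r j (s j)]).
  move=> /existsP [i /andP[si ri]].
  rewrite (bigD1 i) //= mxE ri eq_sym (negbTE si) add0r mul0r mulr0 //.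
move=> /existsPn H.
have Hd : forall j, r (s j) j.
  move=> j; have := H j; case: (eqVneq (s j) j) => [->|nj] /=; first by rewrite rr.
  by move=> nr; move: (rtot j (s j)); rewrite (negbTE nr).
case: (pickP (fun i => s i != i)) => [i hi|h]; last first.
  by exfalso; move/eqP: hs; apply; apply/permP => i; rewrite perm1; apply/eqP; move: (h i) => /negbFE.
have Hk : forall k, r (iter k.+1 s i) (s i).
  elim => [|k IH]; first exact: rr.
  by rewrite iterS; apply: rt (Hd _) IH.
have := Hk (#[s]%g).-1; rewrite prednK ?order_gt0 // -permX expg_order perm1 => ri.
by move: (H i); rewrite hi ri.
rewrite odd_perm1 expr0 mul1r; apply: big1 => i _.
by rewrite mxE perm1 eqxx rr.
Qed.

Lemma det_twin n (r : rel 'I_n) a b : (forall i, r i i) -> a != b -> ~~ r a b -> ~~ r b a ->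
  (forall k, k != a -> k != b -> r a k = r b k) -> \det (Mr r) = 0.
Proof.
move=> rr nab rab rba H; apply: (determinant_alternate nab) => k; rewrite !mxE.
case: (eqVneq k a) => [->|nka].
  by rewrite rr (negbTE rba) eq_sym (negbTE nab).
case: (eqVneq k b) => [->|nkb].
  by rewrite rr (negbTE rab).
by rewrite H // ![_ == k]eq_sym (negbTE nka) (negbTE nkb).
Qed.

Theorem mainTheorem16 (T : finType) (opens : {set {set T}}) (n : nat)
    (f : 'I_n -> T) :
  is_topology opens -> is_T0 opens -> (0 < #|T|)%N ->
  bijective f ->
  (top_total opens <-> \det (XM opens f + 1%:M) = 1) /\
  (\det (XM opens f + 1%:M) = 0 <-> ~ top_total opens).
Proof.
move=> _ T0 _ [g fg gf].
pose r := fun i j => top_le opens (f i) (f j).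
have EM : XM opens f + 1%:M = Mr r by apply/matrixP => i j; rewrite !mxE.
rewrite EM.
have finj : injective f by exact: can_inj fg.
have tot1 : top_total opens -> \det (Mr r) = 1.
  move=> tt; apply: det_total.
  - by move=> i; apply: tle_refl.
  - by move=> i j k; apply: tle_trans.
  - by move=> i j h1 h2; apply: finj; apply: tle_anti h1 h2.
  - by move=> i j; apply: tt.
have tot0 : ~ top_total opens -> \det (Mr r) = 0.
  move=> nt; case: (twin T0 nt) => a [b [nab lab lba H]].
  apply: (@det_twin _ _ (g a) (g b)); rewrite /r ?gf //.
  - by move=> i; apply: tle_refl.
  - by apply: contra nab => /eqP e; rewrite -(gf a) e gf.
  - move=> k nka nkb; have := H (f k); rewrite /tlt.
    have -> : (a != f k) by apply: contra nka => /eqP ->; rewrite fg.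
    have -> : (b != f k) by apply: contra nkb => /eqP ->; rewrite fg.
    by [].
have dec : top_total opens \/ ~ top_total opens.
  case: (boolP [forall x, forall y, top_le opens x y || top_le opens y x]).
    by move=> /forallP H; left => x y; exact: (forallP (H x) y).
  move=> /forallPn [x /forallPn [y Hy]]; right => tt.
  by move: Hy; rewrite tt.
split; split.
- exact: tot1.
- move=> h1; case: dec => // nt; by move: h1; rewrite tot0.
- move=> h0 tt; by move: h0; rewrite tot1.
- exact: tot0.
Qed.
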